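(* Let $\mathbb{F}$ be any field and let $\pi,\sigma\in S_n$ be such that their permutation matrices are similar in $GL(n,\mathbb{F})$. Then for every integer $d\ge 1$, $m_d(\pi)=m_d(\sigma)$, where $m_d(\pi)$ denotes the number of cycles of $\pi$ whose length is divisible by $d$.
   Context: The permutation matrix $[\pi]$ of $\pi\in S_n$ is defined by $[\pi]_{i,j}=1$ if $i=\pi(j)$ and $0$ otherwise. Cycles include fixed points as cycles of length 1. *)

(* Defs.v *)
From mathcomp Require Import all_boot all_algebra all_fingroup.
Set Implicit Arguments. Unset Strict Implicit. Unset Printing Implicit Defensive.
Import GRing.Theory.
Local Open Scope ring_scope.

Definition pmat (F : fieldType) (n : nat) (p : 'S_n) : 'M[F]_n :=
  \matrix_(i, j) (if i == p j then 1 else 0).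

Definition similar_GL (F : fieldType) (n : nat) (A B : 'M[F]_n) : Prop :=
  exists2 P : 'M[F]_n, P \in unitmx & B = P *m A *m invmx P.

(* m_d(pi): number of cycles (orbits, fixed points included) of pi whose
   length is divisible by d. *)
Definition m_cyc (n : nat) (d : nat) (p : 'S_n) : nat :=
  #|[set C in porbits p | (d %| #|C|)%N]|.

(* Main.v *)
Require Import Defs.
From mathcomp Require Import all_boot all_algebra all_fingroup all_solvable.
Set Implicit Arguments. Unset Strict Implicit. Unset Printing Implicit Defensive.
Import GRing.Theory Num.Theory.

Lemma porbit_fixE (T : finType) (t : {perm T}) y m :
  ((t ^+ m)%g y == y) = (#|porbit t y| %| m).
Proof.
set l := #|porbit t y|.
have l0 : 0 < l by rewrite lt0n card_porbit_neq0.
have tl : (t ^+ l)%g y = y by rewrite permX iter_porbit.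
have tlq q : (t ^+ (l * q))%g y = y.
  by rewrite expgnA permX iter_fix.
rewrite {1}(divn_eq m l) expgnDr permM mulnC tlq /dvdn.
have rl : m %% l < l by rewrite ltn_mod.
have U := uniq_traject_porbit t y.
have := nth_uniq y _ _ U; rewrite size_traject => /(_ _ _ rl l0).
by rewrite !nth_traject // permX => ->.
Qed.
Lemma porbit_powE (T : finType) (s : {perm T}) y k :
  #|porbit (s ^+ k)%g y| * gcdn #|porbit s y| k = #|porbit s y|.
Proof.
set l := #|porbit s y|; set a := #|porbit (s ^+ k)%g y|.
have l0 : 0 < l by rewrite lt0n card_porbit_neq0.
have g0 : 0 < gcdn l k by rewrite gcdn_gt0 l0.
have gl : gcdn l k %| l by apply: dvdn_gcdl.
have H m : (a %| m) = (l %/ gcdn l k %| m).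
  rewrite -porbit_fixE -expgnA porbit_fixE -/l.
  rewrite -[X in _ = X](dvdn_pmul2r g0) divnK //.
  have -> : (l %| k * m) = (l %| gcdn (k * m) (l * m)) by rewrite dvdn_gcd (dvdn_mulr _ (dvdnn l)) andbT.
  by rewrite -muln_gcdl gcdnC mulnC.
have e : a = l %/ gcdn l k by apply/eqP; rewrite eqn_dvd H dvdnn -H dvdnn.
by rewrite e divnK.
Qed.
Open Scope ring_scope.
Lemma sum_porbits (T : finType) (s : {perm T}) (f : {set T} -> rat) :
  \sum_(C in porbits s) f C = \sum_(x : T) f (porbit s x) / (#|porbit s x|)%:R.
Proof.
rewrite (partition_big_imset (porbit s) (mem T)) /=.
apply: eq_bigr => _ /imsetP[x _ ->].
rewrite (eq_bigr (fun _ => f (porbit s x) / (#|porbit s x|)%:R)); last first.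
  by move=> y /eqP ->.
rewrite sumr_const.
have -> : #|[pred y | porbit s y == porbit s x]| = #|porbit s x|.
  by apply: eq_card => y; rewrite !inE eq_porbit_mem.
rewrite -[_ *+ _]mulr_natr -mulrA mulVf ?mulr1 //.
by rewrite pnatr_eq0 card_porbit_neq0.
Qed.
Lemma card_porbits_pow (T : finType) (s : {perm T}) k :
  #|porbits (s ^+ k)%g| = (\sum_(C in porbits s) gcdn #|C| k)%N.
Proof.
apply/eqP; rewrite -(eqr_nat rat); apply/eqP.
rewrite natr_sum.
have -> : (#|porbits (s ^+ k)%g|%:R : rat) = \sum_(C in porbits (s ^+ k)%g) 1.
  by rewrite sumr_const.
rewrite !sum_porbits; apply: eq_bigr => y _.
have := porbit_powE s y k.
set a := #|porbit _ y|; set l := #|porbit s y|; set g := gcdn l k => e.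
have a0 : (a%:R : rat) != 0 by rewrite pnatr_eq0 card_porbit_neq0.
have g0 : (g%:R : rat) != 0 by rewrite pnatr_eq0 -lt0n gcdn_gt0 lt0n card_porbit_neq0.
by rewrite -e natrM mul1r invfM mulrCA mulfV // mulr1.
Qed.
Close Scope ring_scope.
Lemma gcd_totient l k : 0 < k ->
  gcdn l k = \sum_(e < k.+1 | e %| k) totient e * (e %| l).
Proof.
move=> k0.
have g0 : 0 < gcdn l k by rewrite gcdn_gt0 k0 orbT.
rewrite -(big_mkord (fun e => e %| k) (fun e => totient e * (e %| l))).
rewrite -{1}(sum_totient_dvd (gcdn l k)) -(big_mkord (fun e => e %| _)).
rewrite (@big_nat_widen _ _ _ 0 (gcdn l k).+1 k.+1); last by rewrite ltnS dvdn_leq // dvdn_gcdr.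
rewrite big_mkcond [RHS]big_mkcond; apply: eq_big_nat => e _.
case dg: (e %| gcdn l k) => /=.
  rewrite ltnS dvdn_leq //.
  by move: dg; rewrite dvdn_gcd => /andP[-> ->]; rewrite muln1.
by move: dg; rewrite dvdn_gcd; case: (e %| l); case: (e %| k); rewrite ?muln0.
Qed.
Lemma sum_gcd_m n (p : 'S_n) k : 0 < k ->
  \sum_(C in porbits p) gcdn #|C| k = \sum_(e < k.+1 | e %| k) totient e * m_cyc e p.
Proof.
move=> k0.
under eq_bigr => C _ do rewrite (gcd_totient _ k0).
rewrite exchange_big /=.
apply: eq_bigr => e _; rewrite -big_distrr /=; congr (_ * _).
rewrite /m_cyc -sum1_card big_mkcond [RHS]big_mkcond /=.
apply: eq_bigr => C _; rewrite !inE; by case: (C \in _); case: (e %| _).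
Qed.
Lemma m_from_c (mp ms : nat -> nat) :
 (forall k, 0 < k -> \sum_(e < k.+1 | e %| k) totient e * mp e =
                     \sum_(e < k.+1 | e %| k) totient e * ms e) ->
 forall d, 0 < d -> mp d = ms d.
Proof.
move=> H d; elim: d {-2}d (leqnn d) => [|N IH] d dN d0; first by case: d dN d0.
have := H d d0.
rewrite (bigD1 ord_max) //= [X in _ = X](bigD1 ord_max) //=.
rewrite (eq_bigr (fun e : 'I_d.+1 => totient e * ms e)).
  move/eqP; rewrite eqn_add2r eqn_pmul2l ?totient_gt0 //; exact/eqP.
move=> e /andP[ed ne]; congr (_ * _); apply: IH.
- have el : e < d.
    rewrite ltn_neqAle dvdn_leq // andbT.
    by apply: contra ne => /eqP ee; apply/eqP/val_inj.
  by rewrite -ltnS (leq_trans _ dN).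
- by case: (nat_of_ord e) ed => //; rewrite dvd0n => /eqP d00; rewrite d00 in d0.
Qed.
Open Scope ring_scope.
Section M.
Variable F : fieldType.

Lemma pmatM n (p q : 'S_n) : pmat F p *m pmat F q = pmat F (q * p)%g.
Proof.
apply/matrixP => i j; rewrite !mxE (bigD1 (q j)) //= !mxE eqxx mulr1 big1 ?addr0.
  by rewrite permM.
by move=> k /negbTE kq; rewrite !mxE kq mulr0.
Qed.

Lemma pmatX n (p : 'S_n) k : pmat F p ^+ k = pmat F (p ^+ k)%g.
Proof.
elim: k => [|k IH].
  by apply/matrixP => i j; rewrite expr0 !mxE perm1; case: (i == j).
by rewrite exprS IH -mulmxE pmatM expgSr.
Qed.

Lemma rank_conj_le n (P X : 'M[F]_n) : P \in unitmx ->
  (\rank (P *m X *m invmx P) <= \rank X)%N.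
Proof.
move=> uP; rewrite mxrankMfree ?mxrankM_maxr //.
by rewrite row_free_unit unitmx_inv.
Qed.

Lemma rank_conj n (P X : 'M[F]_n) : P \in unitmx ->
  \rank (P *m X *m invmx P) = \rank X.
Proof.
move=> uP; apply/eqP; rewrite eqn_leq rank_conj_le //=.
have e : invmx P *m (P *m X *m invmx P) *m invmx (invmx P) = X.
  by rewrite invmxK !mulmxA mulVmx // mul1mx mulmxKV.
by rewrite -{1}e rank_conj_le ?unitmx_inv.
Qed.

Lemma conjX n (P A : 'M[F]_n) k : P \in unitmx ->
  (P *m A *m invmx P) ^+ k = P *m A ^+ k *m invmx P.
Proof.
move=> uP; elim: k => [|k IH].
  by rewrite !expr0 mulmx1 mulmxV.
by rewrite !exprS IH -!mulmxE !mulmxA mulmxKV.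
Qed.

End M.
Section K.
Variable F : fieldType.
Variables (n : nat) (t : 'S_n).

Let O := porbits t.
Let N := #|O|.
Let cv (i : 'I_N) : {set 'I_n} := enum_val i.

Lemma cvP i : exists y, cv i = porbit t y.
Proof. by rewrite /cv; have /imsetP[y _ ->] := enum_valP i; exists y. Qed.

Lemma mem_cv i x : (x \in cv i) = (cv i == porbit t x).
Proof. by have [y ->] := cvP i; rewrite eq_sym eq_porbit_mem. Qed.

Lemma repP i : exists2 r, [pick y in cv i] = Some r & r \in cv i.
Proof.
case: pickP => [r rin|none]; first by exists r.
have [y e] := cvP i; have := none y; by rewrite e porbit_id.
Qed.

Lemma pmatE (p : 'S_n) i j : pmat F p i j = if i == p j then 1 else 0.
Proof. by rewrite mxE. Qed.

Definition Emx : 'M[F]_(N, n) := \matrix_(i, x) ((x \in cv i)%:R).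
Definition Rmx : 'M[F]_(n, N) :=
  \matrix_(x, i) (if [pick y in cv i] is Some r then (x == r)%:R else 0).

Lemma EmxE i x : Emx i x = (x \in cv i)%:R.
Proof. by rewrite mxE. Qed.
Lemma RmxE x i : Rmx x i = if [pick y in cv i] is Some r then (x == r)%:R else 0.
Proof. by rewrite mxE. Qed.

Lemma sum_delta (f : 'I_n -> F) r : \sum_x f x * (x == r)%:R = f r.
Proof.
rewrite (bigD1 r) //= eqxx mulr1 big1 ?addr0 // => x /negbTE ->; exact: mulr0.
Qed.

Lemma ER : Emx *m Rmx = 1%:M.
Proof.
apply/matrixP => i j; rewrite !mxE.
have [r pr rin] := repP j.
rewrite (eq_bigr (fun x => (x \in cv i)%:R * (x == r)%:R)); last first.
  by move=> x _; rewrite !mxE pr.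
rewrite sum_delta; congr (_%:R); congr (nat_of_bool _).
case: (eqVneq i j) => [->|nij]; first by rewrite rin.
apply: negbTE; apply/negP; rewrite mem_cv => /eqP e.
case/eqP: nij; apply/enum_val_inj; move: rin; rewrite mem_cv -e => /eqP.
by rewrite /cv.
Qed.

Lemma rankE : \rank Emx = N.
Proof.
apply/eqP; rewrite eqn_leq rank_leq_row /=.
by rewrite -{1}(mxrank1 F N) -ER mxrankM_maxl.
Qed.

Let P := pmat F t.

Lemma EP : Emx *m P = Emx.
Proof.
apply/matrixP => i x; rewrite !mxE (bigD1 (t x)) //= !mxE eqxx mulr1 big1 ?addr0.
  have [y ->] := cvP i.
  by rewrite -!eq_porbit_mem -(porbit_perm t 1 x) expg1.
by move=> j /negbTE jt; rewrite !mxE jt mulr0.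
Qed.

Lemma rank_ker_pmat : \rank (kermx (P - 1%:M)) = N.
Proof.
set K := kermx _.
have KP : K *m P = K.
  by apply/eqP; rewrite -subr_eq0 -{2}[K]mulmx1 -mulmxBr mulmx_ker.
have Kt a x : K a (t x) = K a x.
  have := congr1 (fun M : 'M[F]_n => M a x) KP; rewrite /= mxE (bigD1 (t x)) //= big1 ?addr0.
    by rewrite /P pmatE eqxx mulr1.
  by move=> j /negbTE jt; rewrite /P pmatE jt mulr0.
have Korb a x y : y \in porbit t x -> K a y = K a x.
  case/porbitP => m ->; elim: m => [|m IH]; first by rewrite expg0 perm1.
  by rewrite expgSr permM Kt.
have EK : (Emx <= K)%MS.
  by rewrite sub_kermx mulmxBr mulmx1 EP subrr.
have KE : K = K *m Rmx *m Emx.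
  apply/matrixP => a x; rewrite [RHS]mxE.
  have xO : porbit t x \in O by apply: imset_f.
  pose i0 := enum_rank_in xO (porbit t x).
  have ci0 : cv i0 = porbit t x by rewrite /cv enum_rankK_in.
  rewrite (bigD1 i0) //= big1 ?addr0.
    rewrite EmxE mem_cv ci0 eqxx mulr1.
    have [r pr rin] := repP i0.
    rewrite [(K *m Rmx) a i0]mxE (eq_bigr (fun y => K a y * (y == r)%:R)); last first.
      by move=> y _; rewrite RmxE pr.
    by rewrite sum_delta; symmetry; apply: Korb; rewrite -ci0.
  move=> i ni; rewrite EmxE mem_cv.
  case: eqP => [e|]; last by rewrite mulr0.
  by case/eqP: ni; apply: enum_val_inj; move: e ci0; rewrite /cv => -> ->.
have KE' : (K <= Emx)%MS by rewrite KE submxMl.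
apply/eqP; rewrite eqn_leq -{1}rankE mxrankS //= -{1}rankE mxrankS //.
Qed.

End K.
Close Scope ring_scope.

Theorem claim2p4 (F : fieldType) (n : nat) (pi sigma : 'S_n) :
  similar_GL (pmat F pi) (pmat F sigma) ->
  forall d : nat, (0 < d)%N -> m_cyc d pi = m_cyc d sigma.
Proof.
move=> [P uP e].
have key k : #|porbits (pi ^+ k)%g| = #|porbits (sigma ^+ k)%g|.
  rewrite -!(rank_ker_pmat F) !mxrank_ker; congr (_ - _)%N.
  rewrite -!pmatX e conjX //.
  have -> : (P *m pmat F pi ^+ k *m invmx P - 1%:M = P *m (pmat F pi ^+ k - 1%:M) *m invmx P)%R.
    by rewrite mulmxBr mulmxBl mulmx1 mulmxV.
  by rewrite rank_conj.
apply: (m_from_c (mp := fun e => m_cyc e pi) (ms := fun e => m_cyc e sigma)) => k k0.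
by rewrite -!sum_gcd_m // -!card_porbits_pow key.
Qed.
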